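(* Let $\{\varphi_n\}$ be a generalized Riesz system in a Hilbert space $\mathcal H$ with constructing pair $(\{e_n\},T)$, and put $\psi^T_n=(T^{-1})^*e_n$, $n\ge0$. Suppose that $\{e_n\}\subset D(T^*T)\cap D(T^{-1}(T^{-1})^* )$. Then $(\{\varphi_n\},\{\psi^T_n\})$ is a $(D(T^* )\cap D(T^{-1}))$-quasi basis, and $T=\big(\overline{T_{e,\psi^T}|_{D(T^* )\cap D(T^{-1})}}\big)^{-1}$, $(T^{-1})^*=\big(\overline{T_{e,\varphi}|_{D(T^* )\cap D(T^{-1})}}\big)^{-1}$.
   Context: A sequence $\{\varphi_n\}$ is a generalized Riesz system if there exist an ONB $\{e_n\}$ and a densely defined closed operator $T$ with densely defined inverse such that $e_n\in D(T)\cap D((T^{-1})^* )$ and $Te_n=\varphi_n$ for all $n$; $(\{e_n\},T)$ is a constructing pair. Inner product linear in the first argument. For a sequence $\{\chi_n\}$, $D(\chi)=\{x:\sum_n|\langle x,\chi_n\rangle|^2<\infty\}$ and $D_\chi$ is its linear span; $T_{e,\chi}$ is the operator with domain $D(\chi)$, $T_{e,\chi}x=\sum_n\langle x,\chi_n\rangle e_n$. For biorthogonal sequences $\{\varphi_n\},\{\psi_n\}$ and a dense subspace $\mathcal D$ with $D_\varphi\cup D_\psi\subseteq\mathcal D\subseteq D(\varphi)\cap D(\psi)$, the pair is a $\mathcal D$-quasi basis if $\sum_k\langle x,\varphi_k\rangle\langle\psi_k,y\rangle=\langle x,y\rangle$ for all $x,y\in\mathcal D$. Bars denote closures, $|$ restrictions.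 *)

(* Defs.v *)
From HB Require Import structures.
From mathcomp Require Import all_boot all_order all_algebra.
From mathcomp Require Import all_classical all_reals all_analysis.
From mathcomp Require Import complex.
Set Implicit Arguments. Unset Strict Implicit. Unset Printing Implicit Defensive.
Import Order.TTheory GRing.Theory Num.Theory.
Import numFieldNormedType.Exports.
Local Open Scope ring_scope.
Local Open Scope classical_set_scope.

(* The complex numbers over a real type, seen as a numFieldType
   (so that normed modules over them are available). *)
Definition C (R : realType) : numFieldType := R[i].

Section Hilbert.
Variables (R : realType) (H : completeNormedModType (C R)).

(* [ip] is an inner product, linear in the first argument, inducing the norm
   of H.  Together with completeness of H this makes H a Hilbert space. *)
Record inner_product (ip : H -> H -> R[i]) : Prop := {
  ipD : forall x y z, ip (x + y) z = ip x z + ip y z;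
  ipZ : forall (a : C R) x y, ip (a *: x) y = (a : R[i]) * ip x y;
  ip_sym : forall x y, ip y x = conjc (ip x y);
  ip_pos : forall x, x != 0 -> 0 < ip x x;
  ip_norm : forall x, ((`|x| : C R) : R[i]) ^+ 2 = ip x x }.

Variable ip : H -> H -> R[i].

(* Operators are represented by their graphs. *)
Definition op := set (H * H).

Definition opdom (T : op) : set H := [set x | exists y, T (x, y)].
Definition opran (T : op) : set H := [set y | exists x, T (x, y)].

Definition linear_opr (T : op) : Prop :=
  [/\ T (0, 0),
      (forall x y u v, T (x, y) -> T (u, v) -> T (x + u, y + v)),
      (forall (a : C R) x y, T (x, y) -> T (a *: x, a *: y)) &
      (forall x y1 y2, T (x, y1) -> T (x, y2) -> y1 = y2)].

Definition hdense (A : set H) : Prop := closure A = setT.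

Definition closed_opr (T : op) : Prop := closed T.

Definition opinv (T : op) : op := [set p | T (p.2, p.1)].

Definition injective_opr (T : op) : Prop :=
  forall x1 x2 y, T (x1, y) -> T (x2, y) -> x1 = x2.

Definition opadj (T : op) : op :=
  [set p | forall x y, T (x, y) -> ip y p.1 = ip x p.2].

Definition opcomp (S T : op) : op :=
  [set p | exists z, T (p.1, z) /\ S (z, p.2)].

Definition oprestr (T : op) (D : set H) : op := [set p | T p /\ D p.1].

Definition opclosure (T : op) : op := closure T.

Definition ONB (e : nat -> H) : Prop :=
  (forall n m, ip (e n) (e m) = (n == m)%:R) /\
  (forall x, (fun N => \sum_(n < N) (ip x (e n) : C R) *: e n) @ \oo --> x).

Definition Dseq (chi : nat -> H) : set H :=
  [set x | cvgn (series (fun n => Normc.normc (ip x (chi n)) ^+ 2))].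

Definition sspan (chi : nat -> H) : set H :=
  [set x | exists (N : nat) (a : nat -> C R), x = \sum_(n < N) a n *: chi n].

Definition T_e_chi (e chi : nat -> H) : op :=
  [set p | Dseq chi p.1 /\
     (fun N => \sum_(n < N) (ip p.1 (chi n) : C R) *: e n) @ \oo --> p.2].

Definition constructing_pair (e : nat -> H) (T : op) (phi : nat -> H) : Prop :=
  [/\ ONB e, linear_opr T, hdense (opdom T), closed_opr T &
      [/\ injective_opr T, hdense (opdom (opinv T)) &
      forall n, [/\ opdom T (e n), opdom (opadj (opinv T)) (e n) & T (e n, phi n)]]].

Definition biorthogonal (phi psi : nat -> H) : Prop :=
  forall n m, ip (phi n) (psi m) = (n == m)%:R.

Definition quasi_basis (phi psi : nat -> H) (D : set H) : Prop :=
  [/\ biorthogonal phi psi, hdense D,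
      sspan phi `|` sspan psi `<=` D, D `<=` Dseq phi `&` Dseq psi &
      forall x y, D x -> D y ->
        series (fun k => (ip x (phi k) * ip (psi k) y : C R)) @ \oo --> (ip x y : C R)].

End Hilbert.

(* Main.v *)
Require Import Defs.
From HB Require Import structures.
From mathcomp Require Import all_boot all_order all_algebra.
From mathcomp Require Import all_classical all_reals all_analysis.
From mathcomp Require Import complex.
From mathcomp Require Import ring lra.
Set Implicit Arguments. Unset Strict Implicit. Unset Printing Implicit Defensive.
Import Order.TTheory GRing.Theory Num.Theory.
Import numFieldNormedType.Exports.
Local Open Scope ring_scope.
Local Open Scope classical_set_scope.
Notation Rea := complex.Re.
Notation Ima := complex.Im.

Local Open Scope ring_scope.
Local Open Scope classical_set_scope.

Section Cplx.
Variable R : realType.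
Local Open Scope complex_scope.
Implicit Types a b : R[i].
Lemma cReM a b : Rea (a * b) = Rea a * Rea b - Ima a * Ima b.
Proof. by case: a => ? ?; case: b. Qed.
Lemma cImM a b : Ima (a * b) = Rea a * Ima b + Ima a * Rea b.
Proof. by case: a => ? ?; case: b. Qed.
Lemma cReD a b : Rea (a + b) = Rea a + Rea b.
Proof. by case: a => ? ?; case: b. Qed.
Lemma cImD a b : Ima (a + b) = Ima a + Ima b.
Proof. by case: a => ? ?; case: b. Qed.
Lemma cReN a : Rea (- a) = - Rea a.
Proof. by case: a. Qed.
Lemma cImN a : Ima (- a) = - Ima a.
Proof. by case: a. Qed.
Lemma cReB a b : Rea (a - b) = Rea a - Rea b.
Proof. by rewrite cReD cReN. Qed.
Lemma cImB a b : Ima (a - b) = Ima a - Ima b.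
Proof. by rewrite cImD cImN. Qed.
Lemma cReJ a : Rea (a^*)%C = Rea a. Proof. by case: a. Qed.
Lemma cImJ a : Ima (a^*)%C = - Ima a. Proof. by case: a. Qed.
Lemma cReR (r : R) : Rea (r%:C) = r. Proof. by []. Qed.
Lemma cImR (r : R) : Ima (r%:C) = 0. Proof. by []. Qed.
Lemma cRe0 : Rea (0 : R[i]) = 0. Proof. by []. Qed.
Lemma cIm0 : Ima (0 : R[i]) = 0. Proof. by []. Qed.
Lemma cRe1 : Rea (1 : R[i]) = 1. Proof. by []. Qed.
Lemma cIm1 : Ima (1 : R[i]) = 0. Proof. by []. Qed.
Lemma cplx_eq a b : Rea a = Rea b -> Ima a = Ima b -> a = b.
Proof. by case: a => ? ?; case: b => ? ? /= -> ->. Qed.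
Definition m2 a : R := Rea a ^+ 2 + Ima a ^+ 2.
Lemma m2_ge0 a : 0 <= m2 a.
Proof. by rewrite /m2 addr_ge0 // sqr_ge0. Qed.
Lemma m2_eq0 a : m2 a = 0 -> a = 0.
Proof.
rewrite /m2 => h; have h1 : Rea a = 0 by nra. have h2 : Ima a = 0 by nra.
by apply: cplx_eq.
Qed.
Lemma mulJ a : a * (a^*)%C = (m2 a)%:C.
Proof. apply: cplx_eq; rewrite ?cReM ?cImM ?cReJ ?cImJ /m2 /=; ring. Qed.
Lemma normc2 a : Normc.normc a ^+ 2 = m2 a.
Proof. case: a => x y /=; rewrite sqr_sqrtr //; nra. Qed.
End Cplx.

Section CplxJ.
Variable R : realType.
Local Open Scope complex_scope.
Implicit Types a b : R[i].
Lemma conjcD' a b : (a + b)^* = a^* + b^*.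
Proof. by apply: cplx_eq; rewrite ?cReD ?cImD ?cReJ ?cImJ ?cReD ?cImD //= opprD. Qed.
Lemma conjcM' a b : (a * b)^* = a^* * b^*.
Proof. apply: cplx_eq; rewrite ?cReM ?cImM ?cReJ ?cImJ ?cReM ?cImM /=; ring. Qed.
Lemma conjcK' a : (a^*)^* = a.
Proof. by apply: cplx_eq; rewrite ?cReJ ?cImJ ?opprK. Qed.
End CplxJ.

Section IPS.
Variables (R : realType) (V : lmodType (C R)) (ipV : V -> V -> C R).
Local Open Scope complex_scope.
Record ips : Prop := {
  sD : forall x y z, ipV (x + y) z = ipV x z + ipV y z;
  sZ : forall (a : C R) x y, ipV (a *: x) y = (a : R[i]) * ipV x y;
  sS : forall x y, ipV y x = conjc (ipV x y);
  sP : forall x, x != 0 -> 0 < ipV x x }.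
Hypothesis hV : ips.

Lemma ip0l x : ipV 0 x = 0.
Proof. by rewrite -(scale0r (0 : V)) (sZ hV) mul0r. Qed.
Lemma ipJ x y : conjc (ipV y x) = ipV x y.
Proof. by rewrite (sS hV x y) conjcK'. Qed.
Lemma ip0r x : ipV x 0 = 0.
Proof. by rewrite (sS hV) ip0l; apply: cplx_eq; rewrite ?cReJ ?cImJ /= ?oppr0. Qed.
Lemma ipNl x y : ipV (- x) y = - ipV x y.
Proof. by rewrite -scaleN1r (sZ hV) mulN1r. Qed.
Lemma ipBl x y z : ipV (x - y) z = ipV x z - ipV y z.
Proof. by rewrite (sD hV) ipNl. Qed.
Lemma ipDr x y z : ipV x (y + z) = ipV x y + ipV x z.
Proof. by rewrite (sS hV) (sD hV) conjcD'; congr (_ + _); apply: ipJ. Qed.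
Lemma ipZr (a : C R) x y : ipV x (a *: y) = conjc (a : R[i]) * ipV x y.
Proof. by rewrite (sS hV) (sZ hV) conjcM'; congr (_ * _); apply: ipJ. Qed.
Lemma ipNr x y : ipV x (- y) = - ipV x y.
Proof. by rewrite -scaleN1r ipZr; apply: cplx_eq; rewrite ?cReM ?cImM ?cReN ?cImN /=; ring. Qed.
Lemma ipBr x y z : ipV x (y - z) = ipV x y - ipV x z.
Proof. by rewrite ipDr ipNr. Qed.

Definition Q x := Rea (ipV x x).
Lemma ipQ x : ipV x x = (Q x)%:C.
Proof.
apply: cplx_eq => //=; have := congr1 (@complex.Im R) (sS hV x x); rewrite cImJ => h.
rewrite /=; lra.
Qed.
Lemma Q_ge0 x : 0 <= Q x.
Proof.
have [->|nx] := eqVneq x 0; first by rewrite /Q ip0l.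
by have := sP hV nx; rewrite ipQ ltcR => /ltW.
Qed.
Lemma Q_gt0 x : x != 0 -> 0 < Q x.
Proof. by move=> nx; have := sP hV nx; rewrite ipQ ltcR. Qed.
Lemma Q_eq0 x : Q x = 0 -> x = 0.
Proof.
have [->//|nx] := eqVneq x 0; by have := Q_gt0 nx => /[swap] ->; rewrite ltxx.
Qed.
Lemma Q0 : Q 0 = 0. Proof. by rewrite /Q ip0l. Qed.
Lemma QD x y : Q (x + y) = Q x + Q y + 2 * Rea (ipV x y).
Proof.
rewrite /Q (sD hV) !ipDr !cReD (sS hV y x) cReJ; ring.
Qed.
Lemma QN x : Q (- x) = Q x.
Proof. by rewrite /Q ipNl ipNr opprK. Qed.
Lemma QB x y : Q (x - y) = Q x + Q y - 2 * Rea (ipV x y).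
Proof. rewrite QD QN ipNr cReN; ring. Qed.
Lemma QZ (a : C R) x : Q (a *: x) = m2 a * Q x.
Proof.
rewrite /Q (sZ hV) ipZr mulrA mulJ ipQ.
by rewrite cReM /=; ring.
Qed.
Lemma ReipZr (a : C R) x y :
  Rea (ipV x (a *: y)) = Rea a * Rea (ipV x y) + Ima a * Ima (ipV x y).
Proof. rewrite ipZr cReM cReJ cImJ; ring. Qed.
Lemma Qpar x y : Q (x + y) + Q (x - y) = 2 * Q x + 2 * Q y.
Proof. rewrite QD QB; ring. Qed.
Lemma Qtri x y : Q (x + y) <= 2 * (Q x + Q y).
Proof. have := Qpar x y; have := Q_ge0 (x - y); lra. Qed.

Lemma CS x y : m2 (ipV x y) <= Q x * Q y.
Proof.
have [->|ny] := eqVneq y 0; first by rewrite ip0r /m2 Q0 mulr0 /= expr0n /= addr0.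
have qy := Q_gt0 ny.
set c := ipV x y.
pose r := (Q y)^-1.
have hr : r * Q y = 1 by rewrite mulVf // gt_eqF.
have := Q_ge0 (x - ((r%:C * c) : C R) *: y).
rewrite QB QZ ReipZr -/c.
have -> : m2 ((r%:C * c)) = r ^+ 2 * m2 c.
  by rewrite /m2 cReM cImM /=; ring.
rewrite cReM cImM /= => h.
have hm := m2_ge0 c; rewrite /m2 in h hm *.
set m := Rea c ^+ 2 + Ima c ^+ 2 in h hm *.
have h1 : Q x + r ^+ 2 * m * Q y - 2 * ((r * Rea c - 0 * Ima c) * Rea c + (r * Ima c + 0 * Rea c) * Ima c)
   = Q x + r ^+ 2 * m * Q y - 2 * r * m by rewrite /m; ring.
rewrite h1 in h.
have h2 := mulr_ge0 (ltW qy) h.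
have h3 : Q y * (Q x + r ^+ 2 * m * Q y - 2 * r * m) = Q x * Q y + (r * Q y) ^+ 2 * m - 2 * (r * Q y) * m by ring.
rewrite h3 hr in h2; lra.
Qed.
Lemma CSl x y z : m2 (ipV x z - ipV y z) <= Q (x - y) * Q z.
Proof. by rewrite -ipBl CS. Qed.
End IPS.

Lemma small_eps (R : realType) (e : R) : 0 < e ->
  exists N, forall n, (N <= n)%N -> n.+1%:R^-1 < e.
Proof.
move=> e0; exists (Num.Def.trunc e^-1) => n hn.
have h1 := truncnS_gt e^-1.
have h2 : (Num.Def.trunc e^-1).+1%:R <= n.+1%:R :> R by rewrite ler_nat ltnS.
rewrite -[e]invrK ltf_pV2 ?posrE ?invr_gt0 //; lra.
Qed.

Section Proj.
Variables (R : realType) (V : lmodType (C R)) (ipV : V -> V -> C R).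
Hypothesis hV : ips ipV.
Local Notation Q := (Q ipV).
Local Open Scope complex_scope.

Definition qto (u : nat -> V) l :=
  forall e : R, 0 < e -> exists N, forall n, (N <= n)%N -> Q (u n - l) < e.
Definition qcauchy (u : nat -> V) :=
  forall e : R, 0 < e -> exists N, forall n m, (N <= n)%N -> (N <= m)%N ->
    Q (u n - u m) < e.
Hypothesis hcomplete : forall u, qcauchy u -> exists l, qto u l.

Lemma projthm (M : set V) : M 0 -> (forall x y, M x -> M y -> M (x + y)) ->
  (forall (a : C R) x, M x -> M (a *: x)) ->
  forall p, exists m : nat -> V, exists l,
    [/\ forall k, M (m k), qto m l & forall x, M x -> ipV (p - l) x = 0].
Proof.
move=> M0 MD MZ p.
pose S := [set Q (p - x) | x in M].
have S0 : S !=set0 by exists (Q (p - 0)); exists 0.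
have Slb : has_lbound S by exists 0 => _ [x _ <-]; apply: Q_ge0.
pose d := inf S.
have hd : forall x, M x -> d <= Q (p - x).
  by move=> x Mx; apply: (ge_inf Slb); exists x.
have : forall k : nat, exists x, M x /\ Q (p - x) < d + k.+1%:R^-1.
  move=> k; have [_ [x Mx <-] h] := @inf_adherent R S (k.+1%:R^-1) ltac:(by []) (conj S0 Slb).
  by exists x.
move=> /choice [m hm].
have Mm k : M (m k) by case: (hm k).
have two0 : (2 : C R) != 0 by rewrite pnatr_eq0.
have hcau : forall i j, Q (m i - m j) <= 2 * i.+1%:R^-1 + 2 * j.+1%:R^-1.
  move=> i j.
  have := Qpar hV (p - m j) (p - m i).
  have -> : p - m j - (p - m i) = m i - m j.
    by rewrite opprB addrC addrA addrNK.
  pose mid := ((2 : C R)^-1) *: (m i + m j).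
  have Mmid : M mid by apply: MZ; apply: MD.
  have -> : p - m j + (p - m i) = (2 : C R) *: (p - mid).
    rewrite scalerBr /mid scalerA divff // scale1r scalerDl scale1r.
    by rewrite opprD addrACA (addrC (- m j)).
  rewrite QZ //.
  have -> : m2 (2 : C R) = 4.
   rewrite /m2 /=; ring.
  have := hd _ Mmid; case: (hm i) => _ hi; case: (hm j) => _ hj.
  have := Q_ge0 hV (m i - m j).
  move=> h1 h2 h3; clearbody mid d; set a := Q (p - m i) in hi h3 *; set b := Q (p - m j) in hj h3 *; set c := Q (m i - m j) in h1 h3 *. clearbody a b c; set u := i.+1%:R^-1 in hi *; set v := j.+1%:R^-1 in hj *. lra.
have qc : qcauchy m.
  move=> e e0; have [N hN] := small_eps (ltac:(lra) : 0 < e / 8).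
  exists N => n k hn hk; have := hcau n k; have := hN _ hn; have := hN _ hk; move=> h1 h2 h3; set u := n.+1%:R^-1 in h2 h3 *; set v := k.+1%:R^-1 in h1 h3 *; lra.
have [l hl] := hcomplete qc.
exists m, l; split => // x Mx.
have [->|nx] := eqVneq x 0; first by rewrite ip0r.
have qx := Q_gt0 hV nx.
set c := ipV (p - l) x.
apply: m2_eq0.
have := m2_ge0 c; rewrite le_eqVlt => /orP[/eqP <-//|mc].
pose s := (Q x)^-1.
have hs : s * Q x = 1 by rewrite mulVf // gt_eqF.
have s0 : 0 < s by rewrite invr_gt0.
have key : forall k, s * m2 c / 2 < k.+1%:R^-1 + 2 * Q (m k - l).
  move=> k.
  pose t : C R := s%:C * c.
  have := hd _ (MD _ _ (Mm k) (MZ t _ Mx)).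
  rewrite opprD addrA (QB hV) (QZ hV) (ReipZr hV).
  case: (hm k) => _ hk.
  set ck := ipV (p - m k) x.
  have hw := CSl hV (p - m k) (p - l) x.
  have e1 : p - m k - (p - l) = - (m k - l).
    by rewrite opprB addrC opprB addrA addrNK.
  rewrite e1 (QN hV) -/ck -/c in hw.
  have hq := Q_ge0 hV (m k - l).
  rewrite /m2 in hw mc *.
  rewrite /t cReM cImM /= !mul0r !subr0 !addr0.
  move=> h.
  have hw' : s * ((Rea ck - Rea c) ^+ 2 + (Ima ck - Ima c) ^+ 2) <= Q (m k - l).
    rewrite cReB cImB in hw.
    have := ler_wpM2l (ltW s0) hw; rewrite mulrA mulrAC hs mul1r.
    done.
  have hsq : 0 <= (Rea c / 2 + (Rea ck - Rea c)) ^+ 2 + (Ima c / 2 + (Ima ck - Ima c)) ^+ 2.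
    by rewrite addr_ge0 // sqr_ge0.
  have hs2 : s ^+ 2 * (Rea c ^+ 2 + Ima c ^+ 2) * Q x = s * (Rea c ^+ 2 + Ima c ^+ 2).
    by transitivity (s * (Rea c ^+ 2 + Ima c ^+ 2) * (s * Q x)); [ring | rewrite hs mulr1].
  have hm2 : ((s * Rea c) ^+ 2 + (s * Ima c) ^+ 2) * Q x = s * (Rea c ^+ 2 + Ima c ^+ 2).
    by rewrite -hs2; ring.
  rewrite hm2 in h.
  have hsq2 := mulr_ge0 (ltW s0) hsq.
  move: hsq2 hw' h hk hq; set u := k.+1%:R^-1; move=> *.
  nra.
have [N1 hN1] := small_eps (ltac:(by apply: divr_gt0; [apply: mulr_gt0|]) : 0 < s * m2 c / 8).
have [N2 hN2] := hl _ (ltac:(by apply: divr_gt0; [apply: mulr_gt0|]) : 0 < s * m2 c / 8).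
have := key (maxn N1 N2).
have := hN1 (maxn N1 N2) (leq_maxl _ _).
have := hN2 (maxn N1 N2) (leq_maxr _ _).
have := mulr_gt0 s0 mc.
move=> h1 h2 h3 h4; move: h1 h2 h3 h4; rewrite /m2; set u := (maxn N1 N2).+1%:R^-1; set q := Q _; set w := s * _; move=> *; lra.
Qed.
End Proj.

Lemma nearN (P : nat -> Prop) : (exists N, forall n, (N <= n)%N -> P n) -> \forall n \near \oo, P n.
Proof. by case=> N hN; exists N. Qed.
Lemma nearN' (P : nat -> Prop) : (\forall n \near \oo, P n) -> exists N, forall n, (N <= n)%N -> P n.
Proof. by case=> N _ hN; exists N => n hn; apply: hN. Qed.

Section HS.
Variables (R : realType) (H : completeNormedModType (C R)) (ip : H -> H -> R[i]).
Hypothesis Hip : inner_product ip.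
Local Open Scope complex_scope.

Lemma ipsH : ips (V:=H) ip.
Proof. by case: Hip => *; split. Qed.
Local Notation QH := (Q (V:=H) ip).

Lemma ltC (eps : C R) (r : R) : 0 < eps -> (r%:C < eps) = (r < Rea eps).
Proof.
move=> e0; have hi : Ima eps = 0 by apply: ger0_Im; apply: ltW.
by rewrite ltcE /= hi eqxx.
Qed.
Lemma ltC0 (eps : C R) : 0 < eps -> 0 < Rea eps.
Proof. by move=> e0; have := e0; rewrite -[0]/((0:R)%:C) ltC. Qed.

Lemma posC (r : R) : 0 < r -> 0 < r%:C.
Proof. by move=> h; rewrite -[0]/((0:R)%:C) ltcR. Qed.

Definition nr (x : H) : R := Rea `|x|.
Lemma nrE x : `|x| = (nr x)%:C.
Proof.
apply: cplx_eq => //=; apply: ger0_Im; exact: normr_ge0.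
Qed.
Lemma nr_ge0 x : 0 <= nr x.
Proof. by have := normr_ge0 x; rewrite nrE lecR. Qed.
Lemma QE x : QH x = nr x ^+ 2.
Proof.
rewrite /Q -(ip_norm Hip) nrE expr2 cReM /=; ring.
Qed.

Lemma CL0 (A : set H) z :
  closure A z <-> forall e : R, 0 < e -> exists a, A a /\ QH (z - a) < e.
Proof.
split.
  move=> cl e e0; pose d := Num.min e 1.
  have d0 : 0 < d by rewrite /d lt_min e0 ltr01.
  have de : d <= e by rewrite /d ge_min lexx.
  have d1 : d <= 1 by rewrite /d ge_min lexx orbT.
  have [a [Aa ba]] : A `&` ball z d%:C !=set0.
    apply: cl; apply/nbhs_ballP; exists d%:C => //; exact: posC.
  exists a; split => //.
  move: ba; rewrite -ball_normE /= nrE ltcR QE => h.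
  have := nr_ge0 (z - a); nra.
move=> h B /nbhs_ballP [eps e0 sB].
have d0 := ltC0 e0.
have [a [Aa ha]] := h _ (mulr_gt0 d0 d0).
exists a; split => //; apply: sB; rewrite -ball_normE /= nrE ltC //.
rewrite QE in ha; have := nr_ge0 (z - a); nra.
Qed.

Lemma CL1 (A : set (H * H)) p :
  closure A p <-> forall e : R, 0 < e -> exists q, A q /\ QH (p.1 - q.1) < e /\ QH (p.2 - q.2) < e.
Proof.
split.
  move=> cl e e0; pose d := Num.min e 1.
  have d0 : 0 < d by rewrite /d lt_min e0 ltr01.
  have de : d <= e by rewrite /d ge_min lexx.
  have d1 : d <= 1 by rewrite /d ge_min lexx orbT.
  have [q [Aq [b1 b2]]] : A `&` ball p d%:C !=set0.
    apply: cl; apply/nbhs_ballP; exists d%:C => //; exact: posC.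
  exists q; split => //.
  move: b1 b2; rewrite -!ball_normE /= !nrE !ltcR !QE => h1 h2.
  have := nr_ge0 (p.1 - q.1); have := nr_ge0 (p.2 - q.2); split; nra.
move=> h B /nbhs_ballP [eps e0 sB].
have d0 := ltC0 e0.
have [q [Aq [h1 h2]]] := h _ (mulr_gt0 d0 d0).
exists q; split => //; apply: sB; split; rewrite -ball_normE /= nrE ltC //.
  rewrite QE in h1; have := nr_ge0 (p.1 - q.1); nra.
rewrite QE in h2; have := nr_ge0 (p.2 - q.2); nra.
Qed.

Lemma L1 (u : nat -> H) l : u @ \oo --> l -> qto ip u l.
Proof.
move=> /cvgrPdist_lt h e e0; pose d := Num.min e 1.
have d0 : 0 < d by rewrite /d lt_min e0 ltr01.
have de : d <= e by rewrite /d ge_min lexx.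
have d1 : d <= 1 by rewrite /d ge_min lexx orbT.
have [N hN] := nearN' (h _ (posC d0)).
exists N => n hn; have := hN _ hn; rewrite nrE ltcR => h1.
rewrite -(QN ipsH) opprB QE; have := nr_ge0 (l - u n); nra.
Qed.

Lemma completeH (u : nat -> H) : qcauchy ip u -> exists l, qto ip u l.
Proof.
move=> hc.
have : cauchy_ex (u @ \oo).
  move=> eps e0; have d0 := ltC0 e0.
  have [N hN] := hc _ (mulr_gt0 d0 d0).
  exists (u N); apply: nearN; exists N => n hn.
  have := hN N n (leqnn N) hn; rewrite QE => h1.
  rewrite -ball_normE /= nrE ltC //; have := nr_ge0 (u N - u n); nra.
move=> /cauchy_exP /cauchy_cvg hcv.
by exists (lim (u @ \oo)); apply: L1.
Qed.

Definition ip2 (p q : H * H) : C R := ip p.1 q.1 + ip p.2 q.2.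

Lemma ips2 : ips ip2.
Proof.
split.
- by move=> x y z; rewrite /ip2 /= !(sD ipsH); rewrite addrACA.
- by move=> a x y; rewrite /ip2 /= !(sZ ipsH) mulrDr.
- by move=> x y; rewrite /ip2 conjcD'; congr (_ + _); apply: (sS ipsH).
- move=> [x1 x2] nx; rewrite /ip2 /= !(ipQ ipsH).
  have -> : forall a b : R, a%:C + b%:C = (a + b)%:C.
    by move=> a b; apply: cplx_eq; rewrite ?cReD ?cImD //= addr0.
  apply: posC.
  have g1 := Q_ge0 ipsH x1; have g2 := Q_ge0 ipsH x2.
  have [h1|h1] := eqVneq x1 0.
    have n2 : x2 != 0 by apply: contraNneq nx => ->; rewrite h1.
    have := Q_gt0 ipsH n2; lra.
  have := Q_gt0 ipsH h1; lra.
Qed.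

Lemma Q2E p : Q ip2 p = QH p.1 + QH p.2.
Proof. by rewrite /Q /ip2 cReD. Qed.

Lemma complete2 (u : nat -> H * H) : qcauchy ip2 u -> exists l, qto ip2 u l.
Proof.
move=> hc.
have hc1 : qcauchy ip (fun n => (u n).1).
  move=> e e0; have [N hN] := hc e e0; exists N => n m hn hm.
  have := hN n m hn hm; rewrite Q2E /=; have := Q_ge0 ipsH ((u n).2 - (u m).2); lra.
have hc2 : qcauchy ip (fun n => (u n).2).
  move=> e e0; have [N hN] := hc e e0; exists N => n m hn hm.
  have := hN n m hn hm; rewrite Q2E /=; have := Q_ge0 ipsH ((u n).1 - (u m).1); lra.
have [l1 hl1] := completeH hc1; have [l2 hl2] := completeH hc2.
exists (l1, l2) => e e0.
have [N1 hN1] := hl1 (e / 2) (divr_gt0 e0 (ltr0Sn _ 1)).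
have [N2 hN2] := hl2 (e / 2) (divr_gt0 e0 (ltr0Sn _ 1)).
exists (maxn N1 N2) => n hn; rewrite Q2E /=.
have := hN1 n (leq_trans (leq_maxl _ _) hn); have := hN2 n (leq_trans (leq_maxr _ _) hn).
lra.
Qed.
End HS.

Section Reals.
Variable R : realType.
Local Open Scope complex_scope.
Lemma small_le0 (X c : R) : 0 <= c -> (forall e, 0 < e -> X <= c * e) -> X <= 0.
Proof.
move=> c0 h; rewrite leNgt; apply/negP => X0.
have e0 : 0 < X / (c + 1) by apply: divr_gt0; lra.
have := h _ e0.
have -> : c * (X / (c + 1)) = X - X / (c + 1).
  by field; lra.
lra.
Qed.
Lemma m2B (a b : R[i]) : m2 (a - b) <= 2 * (m2 a + m2 b).
Proof. rewrite /m2 cReB cImB; have := sqr_ge0 (Rea a + Rea b); have := sqr_ge0 (Ima a + Ima b); nra. Qed.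
Lemma m2N (a : R[i]) : m2 (- a) = m2 a.
Proof. by rewrite /m2 cReN cImN !sqrrN. Qed.
Lemma m2J (a : R[i]) : m2 (a^*) = m2 a.
Proof. by rewrite /m2 cReJ cImJ sqrrN. Qed.
Lemma normcC (z : R[i]) : `|z| = (Normc.normc z)%:C.
Proof. by case: z => a b; rewrite normc_def. Qed.
Lemma normc_ge0 (z : R[i]) : 0 <= Normc.normc z.
Proof. by case: z => a b /=; apply: sqrtr_ge0. Qed.

Lemma cvgC (f : nat -> C R) (c : C R) :
  (forall e : R, 0 < e -> exists N, forall n, (N <= n)%N -> m2 (f n - c) < e) ->
  f @ \oo --> c.
Proof.
move=> h; apply/cvgrPdist_lt => eps e0; have d0 := ltC0 e0.
have [N hN] := h _ (mulr_gt0 d0 d0); exists N => // n hn.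
rewrite normcC ltC //; have := hN _ hn; rewrite -m2N opprB -normc2.
have := normc_ge0 (c - f n); nra.
Qed.
Lemma cvgR (f : nat -> R) (c : R) :
  (forall e : R, 0 < e -> exists N, forall n, (N <= n)%N -> (f n - c) ^+ 2 < e) ->
  f @ \oo --> c.
Proof.
move=> h; apply/cvgrPdist_lt => eps e0.
have [N hN] := h _ (mulr_gt0 e0 e0); exists N => // n hn.
have := hN _ hn; rewrite -sqrrN opprB -(real_normK (num_real _)).
have := normr_ge0 (c - f n); nra.
Qed.
End Reals.

Section Ops.
Variables (R : realType) (H : completeNormedModType (C R)) (ip : H -> H -> R[i]).
Hypothesis Hip : inner_product ip.
Local Open Scope complex_scope.
Local Notation QH := (Q (V:=H) ip).
Local Notation hV := (ipsH Hip).

Lemma adj0 (A : op H) : opadj ip A (0, 0).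
Proof. by move=> x y _; rewrite /= !(ip0r hV). Qed.
Lemma adjD (A : op H) x w x' w' : opadj ip A (x, w) -> opadj ip A (x', w') ->
  opadj ip A (x + x', w + w').
Proof. move=> h1 h2 a b Aab /=. rewrite (ipDr hV b x x') (ipDr hV a w w'). by rewrite (h1 _ _ Aab) (h2 _ _ Aab). Qed.
Lemma adjZ (A : op H) (c : C R) x w : opadj ip A (x, w) -> opadj ip A (c *: x, c *: w).
Proof. move=> h1 a b Aab /=; rewrite (ipZr hV c b x) (ipZr hV c a w). by rewrite (h1 _ _ Aab). Qed.
Lemma adjN (A : op H) x w : opadj ip A (x, w) -> opadj ip A (- x, - w).
Proof. by move=> h; rewrite -(scaleN1r x) -(scaleN1r w); apply: adjZ. Qed.
Lemma adjB (A : op H) x w x' w' : opadj ip A (x, w) -> opadj ip A (x', w') ->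
  opadj ip A (x - x', w - w').
Proof. by move=> h1 h2; apply: adjD => //; apply: adjN. Qed.

Lemma orth_approx a z :
  (forall e : R, 0 < e -> exists y, QH (z - y) < e /\ ip a y = 0) -> ip a z = 0.
Proof.
move=> h; apply: m2_eq0; apply/eqP; rewrite eq_le m2_ge0 andbT.
apply: (small_le0 (Q_ge0 hV a)) => e e0.
have [y [hy ha]] := h e e0.
have -> : ip a z = ip a (z - y) by rewrite (ipBr hV) ha subr0.
apply: (le_trans (CS hV a (z - y))); apply: ler_wpM2l; [exact: (Q_ge0 hV)|exact: ltW].
Qed.

Lemma orth_dense (A : set H) z : hdense A -> (forall y, A y -> ip z y = 0) -> z = 0.
Proof.
move=> hd h; apply: (Q_eq0 hV); rewrite /Q.
have cl : closure A z by rewrite hd.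
move/(CL0 Hip): cl => cl.
rewrite (orth_approx (a := z) (z := z)) //.
move=> e e0; have [y [Ay hy]] := cl e e0; by exists y; split => //; apply: h.
Qed.

Lemma adj_fun (A : op H) x w1 w2 : hdense (opdom A) ->
  opadj ip A (x, w1) -> opadj ip A (x, w2) -> w1 = w2.
Proof.
move=> hd h1 h2; apply/eqP; rewrite -subr_eq0; apply/eqP.
apply: (orth_dense hd) => a [b Aab].
have := h1 _ _ Aab; have := h2 _ _ Aab; rewrite /= => -> e.
rewrite (sS hV) (ipBr hV) e subrr; by apply: cplx_eq; rewrite ?cReJ ?cImJ //= oppr0.
Qed.

Lemma adj_closed (A : op H) : closed (opadj ip A).
Proof.
move=> p /(CL1 Hip) h x y Axy.
apply/eqP; rewrite -subr_eq0; apply/eqP; apply: m2_eq0.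
apply/eqP; rewrite eq_le m2_ge0 andbT.
have c0 : 0 <= 2 * (QH y + QH x) by have := Q_ge0 hV y; have := Q_ge0 hV x; lra.
apply: (small_le0 c0) => e e0.
have [q [hq [h1 h2]]] := h e e0.
have hqe := hq _ _ Axy.
have -> : ip y p.1 - ip x p.2 = ip y (p.1 - q.1) - ip x (p.2 - q.2).
  by rewrite !(ipBr hV) hqe opprB addrA addrNK.
apply: (le_trans (m2B _ _)).
have c1 := CS hV y (p.1 - q.1); have c2 := CS hV x (p.2 - q.2).
have g1 := ler_wpM2l (Q_ge0 hV y) (ltW h1).
have g2 := ler_wpM2l (Q_ge0 hV x) (ltW h2).
lra.
Qed.

Lemma inv_closed (T : op H) : closed T -> closed (opinv T).
Proof.
move=> cT p /(CL1 Hip) h; apply: cT; apply/(CL1 Hip) => e e0.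
have [q [hq [h1 h2]]] := h e e0.
by exists (q.2, q.1).
Qed.

Lemma closure_qto (A : set (H * H)) (m : nat -> H * H) l :
  (forall k, A (m k)) -> qto (ip2 ip) m l -> closure A l.
Proof.
move=> hA hq; apply/(CL1 Hip) => e e0.
have [N hN] := hq e e0; exists (m N); split => //.
have := hN N (leqnn N); rewrite Q2E /=.
rewrite -[QH (l.1 - _)](QN hV) -[QH (l.2 - _)](QN hV) !opprB.
have := Q_ge0 hV ((m N).1 - l.1); have := Q_ge0 hV ((m N).2 - l.2).
split; lra.
Qed.
End Ops.

Section ONBs.
Variables (R : realType) (H : completeNormedModType (C R)) (ip : H -> H -> R[i]).
Hypothesis Hip : inner_product ip.
Local Open Scope complex_scope.
Local Notation QH := (Q (V:=H) ip).
Local Notation hV := (ipsH Hip).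
Variable e : nat -> H.
Hypothesis He : ONB ip e.

Lemma ip_sum (a : nat -> C R) (v : nat -> H) y N :
  ip (\sum_(n < N) a n *: v n) y = \sum_(n < N) a n * ip (v n) y.
Proof.
elim: N => [|N IH]; first by rewrite !big_ord0 (ip0l hV).
by rewrite !big_ord_recr /= (sD hV) IH (sZ hV).
Qed.

Lemma ParsQ x y : forall eps : R, 0 < eps -> exists N, forall n, (N <= n)%N ->
  m2 (series (fun k => ip x (e k) * ip (e k) y) n - ip x y) < eps.
Proof.
move=> eps e0.
have qy := Q_ge0 hV y.
have d0 : 0 < eps / (QH y + 1) by apply: divr_gt0; lra.
have [N hN] := L1 Hip (proj2 He x) d0.
exists N => n hn.
have -> : series (fun k => ip x (e k) * ip (e k) y) n =
          ip (\sum_(k < n) ip x (e k) *: e k) y.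
  by rewrite (ip_sum (fun k => ip x (e k)) e y n) /series /= big_mkord.
rewrite -(ipBl hV).
apply: (le_lt_trans (CS hV _ _)).
have h := hN _ hn.
have h2 := ler_wpM2r qy (ltW h).
apply: (le_lt_trans h2).
have -> : eps / (QH y + 1) * QH y = eps - eps / (QH y + 1) by field; lra.
lra.
Qed.

Lemma Pars x y : series (fun k => ip x (e k) * ip (e k) y) @ \oo --> (ip x y : C R).
Proof. by apply: cvgC; apply: ParsQ. Qed.

Lemma Dseq_e w : cvgn (series (fun n => Normc.normc (ip w (e n)) ^+ 2)).
Proof.
apply/cvg_ex; exists (QH w); apply: cvgR => eps e0.
have [N hN] := ParsQ w w e0; exists N => n hn.
have := hN _ hn.
have -> : series (fun k => ip w (e k) * ip (e k) w) n =
   (series (fun n => Normc.normc (ip w (e n)) ^+ 2) n)%:C.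
  rewrite /series /=; elim: n {hn} => [|n IH]; first by rewrite !big_nil.
  have hk : forall k, ip w (e k) * ip (e k) w = (Normc.normc (ip w (e k)) ^+ 2)%:C.
    by move=> k; rewrite (sS hV w (e k)) mulJ normc2.
  rewrite !big_nat_recr //= IH hk.
  by apply: cplx_eq; rewrite ?cReD ?cImD /= ?addr0.
rewrite (ipQ hV) /m2 cReB cImB /=; set s := series _ n.
have := sqr_ge0 (0 - 0 : R); lra.
Qed.
End ONBs.

Lemma conjcN' (R : realType) (a : R[i]) : conjc (- a) = - conjc a.
Proof. by apply: cplx_eq; rewrite ?cReJ ?cImJ ?cReN ?cImN ?cReJ ?cImJ. Qed.

Section Core.
Variables (R : realType) (H : completeNormedModType (C R)) (ip : H -> H -> R[i]).
Hypothesis Hip : inner_product ip.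
Local Open Scope complex_scope.
Local Notation QH := (Q (V:=H) ip).
Local Notation hV := (ipsH Hip).
Variable T : op H.
Hypothesis Tlin : linear_opr T.
Hypothesis Tcl : closed_opr T.
Hypothesis Tdense : hdense (opdom T).
Hypothesis Tidense : hdense (opdom (opinv T)).
Local Notation Ts := (opadj ip T).

Lemma T0 : T (0, 0). Proof. by case: Tlin. Qed.
Lemma TD x y u v : T (x, y) -> T (u, v) -> T (x + u, y + v). Proof. by case: Tlin => _ h _ _; apply: h. Qed.
Lemma TZ (a : C R) x y : T (x, y) -> T (a *: x, a *: y). Proof. by case: Tlin => _ _ h _; apply: h. Qed.
Lemma Tfun x y1 y2 : T (x, y1) -> T (x, y2) -> y1 = y2. Proof. by case: Tlin => _ _ _ h; apply: h. Qed.
Lemma TN x y : T (x, y) -> T (- x, - y).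
Proof. by move=> h; rewrite -(scaleN1r x) -(scaleN1r y); apply: TZ. Qed.
Lemma TB x y u v : T (x, y) -> T (u, v) -> T (x - u, y - v).
Proof. by move=> h1 h2; apply: TD => //; apply: TN. Qed.



Lemma Decomp h1 h2 : exists v y p1 p2,
  [/\ T (v, y), Ts (p2, - p1), h1 = v + p1 & h2 = y + p2].
Proof.
have M0 : T 0 by exact: T0.
have MD : forall x y : H * H, T x -> T y -> T (x + y).
  by move=> [? ?] [? ?]; apply: TD.
have MZ : forall (a : C R) (x : H * H), T x -> T (a *: x).
  by move=> a [? ?]; apply: TZ.
have [m [l [Mm ql orth]]] := @projthm _ _ _ (ips2 Hip) (complete2 Hip) _ M0 MD MZ (h1, h2).
have Tl : T l by apply: Tcl; apply: (closure_qto Hip Mm ql).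
exists l.1, l.2, (h1 - l.1), (h2 - l.2); split.
- by clear -Tl; case: l Tl.
- move=> a b Tab /=.
  have := orth (a, b) Tab; rewrite /ip2 /= => hz.
  have hz' : ip (h2 - l.2) b = - ip (h1 - l.1) a.
    by apply/eqP; rewrite -subr_eq0 opprK addrC hz.
  rewrite (sS hV (h2 - l.2) b) hz' (ipNr hV) conjcN'.
  by apply: f_equal; apply: (ipJ hV).
- by rewrite [RHS]addrC subrK.
- by rewrite [RHS]addrC subrK.
Qed.

Lemma SurjTT h : exists v z, T (v, z) /\ Ts (z, h - v).
Proof.
have [v [y [p1 [p2 [Tvy Tsp -> e2]]]]] := Decomp h 0.
exists v, y; split => //.
have e3 : p2 = - y by move/eqP: e2; rewrite eq_sym addrC addr_eq0 => /eqP.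
rewrite e3 in Tsp.
have := adjN Hip Tsp; rewrite !opprK => h2.
by rewrite addrC addKr.
Qed.

Definition M1 : set (H * H) := [set q | T q /\ opdom Ts q.2].
Definition M2 : set (H * H) := [set q | Ts q /\ opdom (opinv T) q.1].

Lemma Core1 u y : T (u, y) -> closure M1 (u, y).
Proof.
move=> Tuy.
have M0 : M1 0 by split; [exact: T0 | exists 0; exact: (adj0 Hip)].
have MD : forall x y : H * H, M1 x -> M1 y -> M1 (x + y).
  move=> [x1 x2] [y1 y2] [h1 [w1 h1']] [h2 [w2 h2']]; rewrite /= in h1' h2' h1 h2 *; split; first exact: TD.
  by exists (w1 + w2); exact: (adjD Hip h1' h2').
have MZ : forall (a : C R) (x : H * H), M1 x -> M1 (a *: x).
  move=> a [x1 x2] [h1 [w1 h1']]; rewrite /= in h1' h1 *; split; first exact: TZ.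
  by exists (a *: w1); exact: (adjZ Hip a h1').
have [m [l [Mm ql orth]]] := @projthm _ _ _ (ips2 Hip) (complete2 Hip) _ M0 MD MZ (u, y).
have Tl : T l by apply: Tcl; apply: (closure_qto Hip (A := T) (fun k => (Mm k).1) ql).
have Tab : T (u - l.1, y - l.2).
  by apply: TB => //; clear -Tl; case: l Tl.
set a := u - l.1 in Tab *; set b := y - l.2 in Tab *.
have [v [z [Tvz Tsz]]] := SurjTT a.
have := orth (v, z) (conj Tvz (ex_intro (fun w => Ts (z, w)) _ Tsz)); rewrite /ip2 /= -/a -/b => hz.
have e1 := Tsz _ _ Tab; rewrite /= in e1.
rewrite e1 (ipBr hV) addrC subrK in hz.
have a0 : a = 0 by apply: (Q_eq0 hV); rewrite /Q hz.
have b0 : b = 0 by rewrite a0 in Tab; apply: (Tfun Tab T0).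
have -> : (u, y) = l.
  move: a0 b0; rewrite /a /b; move/eqP; rewrite subr_eq0 => /eqP ->.
  by move/eqP; rewrite subr_eq0 => /eqP ->; case: (l).
exact: (closure_qto Hip Mm ql).
Qed.

Lemma Core2 x w : Ts (x, w) -> closure M2 (x, w).
Proof.
move=> Txw.
have M0 : M2 0 by split; [exact: (adj0 Hip) | exists 0; exact: T0].
have MD : forall x y : H * H, M2 x -> M2 y -> M2 (x + y).
  move=> [x1 x2] [y1 y2] [h1 [w1 h1']] [h2 [w2 h2']]; rewrite /= in h1' h2' h1 h2 *; split; first exact: (adjD Hip).
  by exists (w1 + w2); exact: (TD h1' h2').
have MZ : forall (a : C R) (x : H * H), M2 x -> M2 (a *: x).
  move=> a [x1 x2] [h1 [w1 h1']]; rewrite /= in h1' h1 *; split; first exact: (adjZ Hip).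
  by exists (a *: w1); exact: (TZ a h1').
have [m [l [Mm ql orth]]] := @projthm _ _ _ (ips2 Hip) (complete2 Hip) _ M0 MD MZ (x, w).
have Tl : Ts l by apply: (adj_closed Hip); apply: (closure_qto Hip (A := Ts) (fun k => (Mm k).1) ql).
have Tab : Ts (x - l.1, w - l.2).
  by apply: (adjB Hip) => //; clear -Tl; case: l Tl.
set a := x - l.1 in Tab *; set b := w - l.2 in Tab *.
have b0 : b = 0.
  have [v [y [p1 [p2 [Tvy Tsp e1 e2]]]]] := Decomp 0 a.
  have ep1 : p1 = - v by move/eqP: e1; rewrite eq_sym addrC addr_eq0 => /eqP.
  rewrite ep1 opprK in Tsp.
  have ey : y = a - p2 by rewrite e2 addrK.
  have Ty : Ts (y, b - v) by rewrite ey; apply: (adjB Hip).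
  have := orth (y, b - v) (conj Ty (ex_intro (fun w => opinv T (y, w)) v Tvy)); rewrite /ip2 /= -/a -/b => hz.
  have e3 := Tab _ _ Tvy; rewrite /= in e3.
  have e4 : ip a y = ip b v by rewrite -(ipJ hV a y) e3; apply: (ipJ hV).
  rewrite e4 (ipBr hV) addrC subrK in hz.
  by apply: (Q_eq0 hV); rewrite /Q hz.
have a0 : a = 0.
  apply: (orth_dense Hip Tidense) => y [u Tuy].
  apply: (orth_approx Hip) => eps e0.
  have [q [[Tq [w' Tw']] [_ h2]]] := (CL1 Hip _ _).1 (Core1 Tuy) eps e0.
  exists q.2; split => //.
  have := orth (q.2, w') (conj Tw' (ex_intro (fun w => opinv T (q.2, w)) q.1 (ltac:(by clear -Tq; case: q Tq)))).
  by rewrite /ip2 /= -/a -/b b0 (ip0l hV) addr0.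
have -> : (x, w) = l.
  move: a0 b0; rewrite /a /b; move/eqP; rewrite subr_eq0 => /eqP ->.
  by move/eqP; rewrite subr_eq0 => /eqP ->; case: (l).
exact: (closure_qto Hip Mm ql).
Qed.
End Core.

Unset Implicit Arguments.
Set Strict Implicit.
Set Printing Implicit Defensive.

Theorem proposition3p5 (R : realType) (H : completeNormedModType (C R))
  (ip : H -> H -> R[i]) (Hip : inner_product ip)
  (e phi psi : nat -> H) (T : op H)
  (HT : constructing_pair ip e T phi)
  (Hpsi : forall n, opadj ip (opinv T) (e n, psi n))
  (He : forall n, opdom (opcomp (opadj ip T) T) (e n) /\
                  opdom (opcomp (opinv T) (opadj ip (opinv T))) (e n)) :
  let D := opdom (opadj ip T) `&` opdom (opinv T) in
  [/\ quasi_basis ip phi psi D,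
      T = opinv (opclosure (oprestr (T_e_chi ip e psi) D)) &
      opadj ip (opinv T) = opinv (opclosure (oprestr (T_e_chi ip e phi) D))].
Proof.
move=> D.
case: HT => ONBe Tlin hdT Tcl [Tinj hdTi hen].
have hV := ipsH Hip.
have Tfun' : forall x y1 y2, T (x, y1) -> T (x, y2) -> y1 = y2 by case: Tlin.
have Tphi n : T (e n, phi n) by case: (hen n).
have S_Ts : forall a b, opadj ip (opinv T) (a, b) -> opadj ip T (b, a).
  by move=> a b h x y Txy; rewrite /=; symmetry; apply: (h y x).
have Ts_S : forall a b, opadj ip T (b, a) -> opadj ip (opinv T) (a, b).
  by move=> a b h x y Txy; rewrite /=; symmetry; apply: (h y x).
have phiD n : D (phi n).
  split; last by exists (e n); apply: Tphi.
  have [y [z [Tez Tsz]]] := (He n).1.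
  by exists y; rewrite (Tfun' _ _ _ (Tphi n) Tez).
have psiTs n : opadj ip T (psi n, e n) by apply: S_Ts.
have psiD n : D (psi n).
  split; first by exists (e n).
  have [y [z [Sez Tyz]]] := (He n).2.
  have -> : psi n = z by apply: (adj_fun Hip hdTi (Hpsi n) Sez).
  by exists y.
have cphi x w n : opadj ip T (x, w) -> ip x (phi n) = ip w (e n).
  move=> h; have := h _ _ (Tphi n); rewrite /= => h2.
  by rewrite -(ipJ hV x (phi n)) h2; apply: (ipJ hV).
have cpsi u y n : T (u, y) -> ip y (psi n) = ip u (e n).
  by move=> h; have := Hpsi n y u h; rewrite /= => ->.
have D0 : D 0.
  by split; [exists 0; exact: (adj0 Hip) | exists 0; exact: (T0 Tlin)].
have DD : forall x y, D x -> D y -> D (x + y).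
  move=> x y [[w1 h1] [u1 g1]] [[w2 h2] [u2 g2]]; split.
    by exists (w1 + w2); exact: (adjD Hip h1 h2).
  by exists (u1 + u2); exact: (TD Tlin g1 g2).
have DZ : forall (a : C R) x, D x -> D (a *: x).
  move=> a x [[w1 h1] [u1 g1]]; split.
    by exists (a *: w1); exact: (adjZ Hip a h1).
  by exists (a *: u1); exact: (TZ Tlin a g1).
have Dsum : forall v : nat -> H, (forall n, D (v n)) ->
    forall N (a : nat -> C R), D (\sum_(n < N) a n *: v n).
  move=> v hv; elim=> [|N IH] a; first by rewrite big_ord0.
  by rewrite big_ord_recr /=; apply: DD; [apply: IH | apply: DZ].
have DDseq : D `<=` Dseq ip phi `&` Dseq ip psi.
  move=> x [[w Tsxw] [u Tux]]; split.
    rewrite /Dseq /=.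
    have -> : (fun n => Normc.normc (ip x (phi n)) ^+ 2) = (fun n => Normc.normc (ip w (e n)) ^+ 2).
      by apply: funext => n; rewrite (cphi _ _ n Tsxw).
    exact: (@Dseq_e _ _ _ Hip _ ONBe w).
  rewrite /Dseq /=.
  have -> : (fun n => Normc.normc (ip x (psi n)) ^+ 2) = (fun n => Normc.normc (ip u (e n)) ^+ 2).
    by apply: funext => n; rewrite (cpsi _ _ n Tux).
  exact: (@Dseq_e _ _ _ Hip _ ONBe u).
have Ddense : hdense D.
  rewrite /hdense; apply/seteqP; split => // z _.
  apply/(CL0 Hip) => eps e0.
  have e4 : 0 < eps / 4 by apply: divr_gt0.
  have clz : closure (opdom (opinv T)) z by rewrite hdTi.
  have [y [[u Tuy] hzy]] := (CL0 Hip _ _).1 clz _ e4.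
  have [q [[Tq [w' Tw']] [_ h2]]] := (CL1 Hip _ _).1 (Core1 Hip Tlin Tcl Tuy) _ e4.
  exists q.2; split.
    split; first by exists w'.
    by exists q.1; clear -Tq; case: q Tq.
  have -> : z - q.2 = (z - y) + (y - q.2) by rewrite addrA subrK.
  apply: (le_lt_trans (Qtri hV _ _)); lra.
have Hqb : quasi_basis ip phi psi D.
  split => //.
  - move=> n m; have := Hpsi m (phi n) (e n) (Tphi n); rewrite /= => <-.
    by rewrite (proj1 ONBe).
  - move=> x [[N [a ->]]|[N [a ->]]]; exact: Dsum.
  - move=> x y [[w Tsxw] _] [_ [u Tuy]].
    have -> : (fun k => (ip x (phi k) * ip (psi k) y : C R)) =
              (fun k => ip w (e k) * ip (e k) u).
      apply: funext => k; rewrite (cphi _ _ k Tsxw); congr (_ * _).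
      by rewrite -(ipJ hV (psi k) y) (cpsi _ _ k Tuy); apply: (ipJ hV).
    have -> : (ip x y : C R) = ip w u.
      have := Tsxw _ _ Tuy; rewrite /= => h.
      by rewrite -(ipJ hV x y) h; apply: (ipJ hV).
    exact: (@Pars _ _ _ Hip _ ONBe w u).
have Mpsi : forall y v, oprestr (T_e_chi ip e psi) D (y, v) <-> D y /\ T (v, y).
  move=> y v; split.
    move=> [[_ hcv] Dy]; split => //.
    case: (Dy) => _ [u Tuy].
    have hcu : (fun N => \sum_(n < N) (ip y (psi n) : C R) *: e n) @ \oo --> u.
      have -> : (fun N => \sum_(n < N) (ip y (psi n) : C R) *: e n) =
                (fun N => \sum_(n < N) (ip u (e n) : C R) *: e n).
        by apply: funext => N; apply: eq_bigr => n _; rewrite (cpsi _ _ n Tuy).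
      exact: (proj2 ONBe u).
    by have /= -> := cvg_unique (@norm_hausdorff _ _) hcv hcu.
  move=> [Dy Tvy]; split => //; split; first exact: (DDseq _ Dy).2.
  rewrite /=.
  have -> : (fun N => \sum_(n < N) (ip y (psi n) : C R) *: e n) =
            (fun N => \sum_(n < N) (ip v (e n) : C R) *: e n).
    by apply: funext => N; apply: eq_bigr => n _; rewrite (cpsi _ _ n Tvy).
  exact: (proj2 ONBe v).
have Mphi : forall x w, oprestr (T_e_chi ip e phi) D (x, w) <-> D x /\ opadj ip T (x, w).
  move=> x w; split.
    move=> [[_ hcv] Dx]; split => //.
    case: (Dx) => [[w' Tw'] _].
    have hcu : (fun N => \sum_(n < N) (ip x (phi n) : C R) *: e n) @ \oo --> w'.
      have -> : (fun N => \sum_(n < N) (ip x (phi n) : C R) *: e n) =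
                (fun N => \sum_(n < N) (ip w' (e n) : C R) *: e n).
        by apply: funext => N; apply: eq_bigr => n _; rewrite (cphi _ _ n Tw').
      exact: (proj2 ONBe w').
    by have /= -> := cvg_unique (@norm_hausdorff _ _) hcv hcu.
  move=> [Dx Tw]; split => //; split; first exact: (DDseq _ Dx).1.
  rewrite /=.
  have -> : (fun N => \sum_(n < N) (ip x (phi n) : C R) *: e n) =
            (fun N => \sum_(n < N) (ip w (e n) : C R) *: e n).
    by apply: funext => N; apply: eq_bigr => n _; rewrite (cphi _ _ n Tw).
  exact: (proj2 ONBe w).
split => //.
- apply/seteqP; split => [[a b] Tab|[a b] cl] /=.
    apply/(CL1 Hip) => eps e0.
    have [q [[Tq [w' Tw']] [h1 h2]]] := (CL1 Hip _ _).1 (Core1 Hip Tlin Tcl Tab) _ e0.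
    exists (q.2, q.1); split => //; apply/Mpsi; split.
      split; first by exists w'.
      by exists q.1; clear -Tq; case: q Tq.
    by clear -Tq; case: q Tq.
  apply: Tcl; apply/(CL1 Hip) => eps e0.
  have [[y v] [/Mpsi [_ Tvy] [h1 h2]]] := (CL1 Hip _ _).1 cl _ e0.
  by exists (v, y).
- apply/seteqP; split => [[a b] Sab|[a b] cl] /=.
    have := Core2 Hip Tlin Tcl hdTi (S_Ts _ _ Sab).
    apply: closure_subset => -[x w] [Tsxw [u Tux]]; apply/Mphi; split => //.
    by split; [exists w | exists u].
  apply: Ts_S; apply: (adj_closed Hip).
  move: cl; apply: closure_subset => -[x w] /Mphi [].
  done.
Qed.
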